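(* Let $H$ be a complex separable Hilbert space and let $S,T\in B(H)$ be normal operators with Cartesian decompositions $S=A+iC$ and $T=B+iD$ ($A,B,C,D$ self-adjoint) such that $C$ and $D$ are positive. Then $$\|ST-TS\|\le \frac12\sqrt{4\|A\|^2+\|C\|^2}\,\sqrt{4\|B\|^2+\|D\|^2}.$$
   Context: $B(H)$ denotes the algebra of bounded linear operators on $H$ with the operator norm. The Cartesian decomposition of $S\in B(H)$ is $S=A+iC$ with $A=\frac{S+S^*}{2}$ and $C=\frac{S-S^*}{2i}$ self-adjoint. *)

(* Defs.v *)
From mathcomp Require Import all_boot all_order all_algebra.
From mathcomp Require Import classical_sets reals.
From mathcomp Require Import complex.
Set Implicit Arguments. Unset Strict Implicit. Unset Printing Implicit Defensive.
Import Order.TTheory GRing.Theory Num.Theory.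
Local Open Scope ring_scope.
Local Open Scope complex_scope.
Local Open Scope classical_set_scope.

Section Hilbert.
Variables (R : realType) (V : lmodType R[i]).

Definition is_inner_product (ip : V -> V -> R[i]) : Prop :=
  [/\ forall (a : R[i]) (x y z : V), ip (a *: x + y) z = a * ip x z + ip y z,
      forall x y : V, ip y x = (ip x y)^*,
      forall x : V, 0 <= ip x x &
      forall x : V, ip x x = 0 -> x = 0].

Definition ipnorm (ip : V -> V -> R[i]) (x : V) : R := Num.sqrt (complex.Re (ip x x)).

Definition ip_complete (ip : V -> V -> R[i]) : Prop :=
  forall u : nat -> V,
    (forall e : R, 0 < e -> exists N, forall m n, (N <= m)%N -> (N <= n)%N ->
        ipnorm ip (u m - u n) < e) ->
    exists l : V, forall e : R, 0 < e -> exists N, forall n, (N <= n)%N ->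
        ipnorm ip (u n - l) < e.

Definition ip_separable (ip : V -> V -> R[i]) : Prop :=
  exists d : nat -> V, forall (x : V) (e : R), 0 < e ->
    exists n, ipnorm ip (x - d n) < e.

Definition separable_hilbert (ip : V -> V -> R[i]) : Prop :=
  [/\ is_inner_product ip, ip_complete ip & ip_separable ip].

Definition bounded_op (ip : V -> V -> R[i]) (T : V -> V) : Prop :=
  (forall (a : R[i]) (x y : V), T (a *: x + y) = a *: T x + T y) /\
  exists M : R, forall x, ipnorm ip (T x) <= M * ipnorm ip x.

Definition is_adjoint (ip : V -> V -> R[i]) (T Ts : V -> V) : Prop :=
  forall x y : V, ip (T x) y = ip x (Ts y).

Definition opnorm (ip : V -> V -> R[i]) (T : V -> V) : R :=
  reals.sup [set ipnorm ip (T x) | x in [set x | ipnorm ip x <= 1]].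

Definition re_part (S Ss : V -> V) : V -> V := fun x => 2^-1 *: (S x + Ss x).
Definition im_part (S Ss : V -> V) : V -> V :=
  fun x => (2 * 'i)^-1 *: (S x - Ss x).

Definition positive_op (ip : V -> V -> R[i]) (C : V -> V) : Prop :=
  forall x : V, 0 <= ip (C x) x.

End Hilbert.

(* Main.v *)
Require Import Defs.
From mathcomp Require Import all_boot all_order all_algebra.
From mathcomp Require Import classical_sets reals.
From mathcomp Require Import complex.
From mathcomp Require Import ring lra.
Set Implicit Arguments. Unset Strict Implicit. Unset Printing Implicit Defensive.
Import Order.TTheory GRing.Theory Num.Theory.
Local Open Scope ring_scope.
Local Open Scope complex_scope.

Local Notation Rc := complex.Re.
Local Notation Ic := complex.Im.
Local Notation cj := complex.conjc.

Section C.
Variable R : realType.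
Implicit Types z w : R[i].
Lemma ReJ z : Rc (cj z) = Rc z. Proof. by case: z. Qed.
Lemma ImJ z : Ic (cj z) = - Ic z. Proof. by case: z. Qed.
Lemma ReMr (t : R) z : Rc (t%:C * z) = t * Rc z. Proof. by case: z => a b; simpc. Qed.
Lemma ImMr (t : R) z : Ic (t%:C * z) = t * Ic z. Proof. by case: z => a b; simpc. Qed.
Lemma ReD z w : Rc (z + w) = Rc z + Rc w. Proof. by case: z; case: w. Qed.
Lemma ImD z w : Ic (z + w) = Ic z + Ic w. Proof. by case: z; case: w. Qed.
Lemma ReN z : Rc (- z) = - Rc z. Proof. by case: z. Qed.
Lemma ImN z : Ic (- z) = - Ic z. Proof. by case: z. Qed.
Lemma ReMJi z : Rc (cj 'i * z) = Ic z. Proof. by case: z => a b; simpc. Qed.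
Lemma conjR (t : R) : cj (t%:C) = t%:C. Proof. by rewrite /= oppr0. Qed.
Lemma ge0_real z : 0 <= z -> z = (Rc z)%:C.
Proof. by case: z => a b; rewrite lecE /= => /andP[/eqP -> _]. Qed.
Lemma ge0_Re z : 0 <= z -> 0 <= Rc z.
Proof. by case: z => a b; rewrite lecE /= => /andP[_ ->]. Qed.
Lemma conj2V : cj ((2:R[i])^-1) = 2^-1.
Proof. by rewrite conjc_inv conjc_nat. Qed.
Lemma conj2iV : cj ((2 * 'i : R[i])^-1) = - (2 * 'i)^-1.
Proof. rewrite conjc_inv -invrN; congr (_^-1). apply/eqP; rewrite eq_complex /=. by rewrite !(mulr0,addr0,mul0r,subr0,oppr0) !eqxx. Qed.
Lemma cjD z w : cj (z + w) = cj z + cj w. Proof. exact: rmorphD. Qed.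
Lemma cjM z w : cj (z * w) = cj z * cj w. Proof. exact: rmorphM. Qed.
Lemma cjN z : cj (- z) = - cj z. Proof. exact: rmorphN. Qed.
Lemma cjK z : cj (cj z) = z. Proof. exact: conjcK. Qed.
Lemma Im0_conj z : cj z = z -> Ic z = 0.
Proof. case: z => a b /= [] h. lra. Qed.
End C.
Section IP.
Variables (R : realType) (V : lmodType R[i]) (ip : V -> V -> R[i]).
Hypothesis hip : is_inner_product ip.

Lemma ipDZ a x y z : ip (a *: x + y) z = a * ip x z + ip y z.
Proof. by case: hip. Qed.
Lemma ip_sym x y : ip y x = cj (ip x y).
Proof. by case: hip. Qed.
Lemma ip_ge0 x : 0 <= ip x x.
Proof. by case: hip. Qed.
Lemma ip_def x : ip x x = 0 -> x = 0.
Proof. by case: hip => _ _ _; apply. Qed.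
Lemma ip0l z : ip 0 z = 0.
Proof. have := ipDZ (-1) 0 0 z. by rewrite scaler0 addr0 mulN1r addNr. Qed.
Lemma ipZl a x z : ip (a *: x) z = a * ip x z.
Proof. by have := ipDZ a x 0 z; rewrite addr0 ip0l addr0. Qed.
Lemma ipDl x y z : ip (x + y) z = ip x z + ip y z.
Proof. by have := ipDZ 1 x y z; rewrite scale1r mul1r. Qed.
Lemma ipNl x z : ip (- x) z = - ip x z.
Proof. by rewrite -scaleN1r ipZl mulN1r. Qed.
Lemma ipBl x y z : ip (x - y) z = ip x z - ip y z.
Proof. by rewrite ipDl ipNl. Qed.
Lemma ipDr x y z : ip x (y + z) = ip x y + ip x z.
Proof. by rewrite ip_sym ipDl cjD -!ip_sym. Qed.
Lemma ipZr a x y : ip x (a *: y) = cj a * ip x y.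
Proof. by rewrite ip_sym ipZl cjM -!ip_sym. Qed.
Lemma ipNr x y : ip x (- y) = - ip x y.
Proof. by rewrite -scaleN1r ipZr cjN conjc1 mulN1r. Qed.
Lemma ipBr x y z : ip x (y - z) = ip x y - ip x z.
Proof. by rewrite ipDr ipNr. Qed.

Definition nq x := Rc (ip x x).
Lemma ipxx x : ip x x = (nq x)%:C.
Proof. exact/ge0_real/ip_ge0. Qed.
Lemma nq_ge0 x : 0 <= nq x.
Proof. exact/ge0_Re/ip_ge0. Qed.
Lemma nq_eq0 x : nq x = 0 -> x = 0.
Proof. by move=> h; apply: ip_def; rewrite ipxx h. Qed.
Lemma ReipC x y : Rc (ip y x) = Rc (ip x y).
Proof. by rewrite ip_sym ReJ. Qed.
Lemma nqD x y : nq (x + y) = nq x + nq y + 2 * Rc (ip x y).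
Proof. rewrite /nq !(ipDl, ipDr) !ReD ReipC. rewrite mulr2n mulrDl mul1r. ring. Qed.
Lemma nqN x : nq (- x) = nq x.
Proof. by rewrite /nq ipNl ipNr opprK. Qed.
Lemma nqB x y : nq (x - y) = nq x + nq y - 2 * Rc (ip x y).
Proof. by rewrite nqD nqN ipNr ReN; ring. Qed.
Lemma nqZr t x : nq (t%:C *: x) = t ^+ 2 * nq x.
Proof. by rewrite /nq ipZl ipZr conjR mulrA -rmorphM ReMr expr2. Qed.
Lemma nqZi x : nq ('i *: x) = nq x.
Proof.
rewrite /nq ipZl ipZr mulrA.
have -> : ('i : R[i]) * cj 'i = 1 by apply/eqP; rewrite eq_complex /= !(mulr0,mul0r,subr0,addr0,add0r,mulr1,mulrN1,opprK,oppr0) !eqxx.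
by rewrite mul1r.
Qed.
Lemma ipnormE x : ipnorm ip x = Num.sqrt (nq x).
Proof. by []. Qed.
Lemma Reip_le t x y : 2 * t * Rc (ip x y) <= t ^+ 2 * nq x + nq y.
Proof. have := nq_ge0 (t%:C *: x - y). rewrite nqB nqZr ipZl ReMr. lra. Qed.
Lemma nqB_le x y : nq (x - y) <= 2 * nq x + 2 * nq y.
Proof. have := nq_ge0 (x + y); rewrite nqB nqD; have := nq_ge0 x; have := nq_ge0 y. lra. Qed.
End IP.
Definition lin (R : realType) (V : lmodType R[i]) (T : V -> V) :=
  forall a x y, T (a *: x + y) = a *: T x + T y.

Section Lin.
Variables (R : realType) (V : lmodType R[i]) (T : V -> V).
Hypothesis hT : lin T.
Lemma lin0 : T 0 = 0.
Proof. have := hT 1 0 0. rewrite scaler0 addr0 scale1r => /(congr1 (fun v => v - T 0)). by rewrite addrK subrr. Qed.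
Lemma linZ a x : T (a *: x) = a *: T x.
Proof. by rewrite -[a *: x]addr0 hT lin0 addr0. Qed.
Lemma linD x y : T (x + y) = T x + T y.
Proof. by rewrite -[x]scale1r hT !scale1r. Qed.
Lemma linN x : T (- x) = - T x.
Proof. by rewrite -scaleN1r linZ scaleN1r. Qed.
Lemma linB x y : T (x - y) = T x - T y.
Proof. by rewrite linD linN. Qed.
End Lin.

Section Op.
Variables (R : realType) (V : lmodType R[i]) (ip : V -> V -> R[i]).
Hypothesis hip : is_inner_product ip.
Variables (S Ss : V -> V).
Hypotheses (hS : lin S) (hSs : is_adjoint ip S Ss) (nS : forall x, S (Ss x) = Ss (S x)).

Lemma ipSsl x y : ip (Ss x) y = ip x (S y).
Proof. by rewrite (ip_sym hip) -hSs -(ip_sym hip). Qed.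

Lemma Ss_lin : lin Ss.
Proof.
move=> a x y; set d := Ss (a *: x + y) - (a *: Ss x + Ss y).
suff : d = 0 by move/eqP; rewrite subr_eq0 => /eqP.
apply: (ip_def hip).
have h : forall z, ip z d = 0.
  move=> z; rewrite /d (ipBr hip) (ipDr hip) (ipZr hip) -!hSs (ipDr hip) (ipZr hip).
  by rewrite subrr.
exact: h.
Qed.

Local Notation A := (re_part S Ss).
Local Notation C := (im_part S Ss).

Lemma A_lin : lin A.
Proof.
move=> a x y; rewrite /re_part hS Ss_lin !scalerDr !scalerA mulrC -!scalerA.
by rewrite -!addrA; congr (_ + _); rewrite addrCA.
Qed.
Lemma C_lin : lin C.
Proof.
move=> a x y; rewrite /im_part hS Ss_lin !scalerBr !scalerDr !scalerA mulrC -!scalerA.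
rewrite opprD !addrA; congr (_ + _); rewrite -!addrA; congr (_ + _); by rewrite addrC.
Qed.
Lemma A_sa x y : ip (A x) y = ip x (A y).
Proof.
by rewrite /re_part (ipZl hip) (ipZr hip) conj2V (ipDl hip) (ipDr hip) hSs ipSsl addrC.
Qed.
Lemma C_sa x y : ip (C x) y = ip x (C y).
Proof.
rewrite /im_part (ipZl hip) (ipZr hip) conj2iV (ipBl hip) (ipBr hip) hSs ipSsl.
by rewrite mulNr -mulrN opprB.
Qed.
Lemma AC x : A (C x) = C (A x).
Proof.
rewrite /re_part /im_part (linZ hS) (linZ Ss_lin) (linB hS) (linB Ss_lin).
rewrite (linZ hS) (linZ Ss_lin) (linD hS) (linD Ss_lin) nS.
rewrite -!scalerDr -!scalerBr !scalerA mulrC; congr (_ *: _).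
rewrite addrA subrK opprD addrA addrK. done.
Qed.
Lemma S_dec x : S x = A x + 'i *: C x.
Proof.
rewrite /re_part /im_part scalerA.
have i0 : ('i : R[i]) != 0 by rewrite eq_complex /= oner_eq0 andbF.
rewrite invfM mulrCA mulfV // mulr1 -scalerDr addrACA subrr addr0.
rewrite -[in RHS](scale1r (S x)) -scalerDl scalerA mulVf ?scale1r //. by rewrite pnatr_eq0. Qed.
Lemma S_shift (r : R) x : S x - ('i * r%:C) *: x = A x + 'i *: (C x - r%:C *: x).
Proof. by rewrite {1}S_dec -addrA scalerBr (scalerA 'i (r%:C)). Qed.

Lemma nq_split (r : R) x :
  nq ip (A x + 'i *: (C x - r%:C *: x)) = nq ip (A x) + nq ip (C x - r%:C *: x).
Proof.
set w := C x - r%:C *: x.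
rewrite (nqD hip) (nqZi hip) (ipZr hip 'i (A x) w) ReMJi /w (ipBr hip) (ipZr hip (r%:C) (A x) x) conjR ImD ImN ImMr.
have h1 : Ic (ip (A x) (C x)) = 0.
  apply: Im0_conj; rewrite -(ip_sym hip) C_sa -AC -A_sa //.
have h2 : Ic (ip (A x) x) = 0.
  by apply: Im0_conj; rewrite -(ip_sym hip) A_sa.
by rewrite h1 h2 mulr0 subr0 mulr0 addr0.
Qed.
End Op.
Section Pos.
Variables (R : realType) (V : lmodType R[i]) (ip : V -> V -> R[i]).
Hypothesis hip : is_inner_product ip.
Variables (C : V -> V) (c : R).
Hypotheses (hC : lin C) (saC : forall x y, ip (C x) y = ip x (C y))
  (pC : forall x, 0 <= ip (C x) x) (c0 : 0 <= c)
  (bC : forall x, nq ip (C x) <= c ^+ 2 * nq ip x).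

Lemma pos_key x : nq ip (C x) <= c * Rc (ip (C x) x).
Proof.
have p0 : 0 <= Rc (ip (C x) x) := ge0_Re (pC x).
have [ce|cpos] := eqVneq c 0.
  by have := bC x; rewrite ce expr2 !mul0r.
have cgt : 0 < c by rewrite lt_def cpos c0.
set q := nq ip (C x); set p := Rc (ip (C x) x).
set r := Rc (ip (C (C x)) (C x)).
have hr : r <= c * q.
  have h1 := Reip_le hip c^-1 (C (C x)) (C x).
  have h2 := bC (C x).
  have hs : c^-1 * c = 1 by rewrite mulVf.
  have hs0 : 0 < c^-1 by rewrite invr_gt0.
  rewrite -/r -/q in h1 h2.
  have h3 : 2 * c^-1 * r <= 2 * q.
    apply: (le_trans h1).
    have : c^-1 ^+ 2 * nq ip (C (C x)) <= c^-1 ^+ 2 * (c ^+ 2 * q).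
      by rewrite ler_wpM2l // exprn_ge0 // ltW.
    rewrite mulrA -exprMn hs expr1n mul1r. lra.
  have : c * (2 * c^-1 * r) <= c * (2 * q) by rewrite ler_wpM2l // ltW.
  have -> : c * (2 / c * r) = 2 * r by field. lra.
have hz := ge0_Re (pC (c%:C *: x - C x)).
rewrite (linB hC) (linZ hC) (ipBl hip) !(ipBr hip) !(ipZl hip) !(ipZr hip) conjR in hz.
have e1 : ip x (C x) = ip (C x) x by rewrite saC.
have e2 : ip (C (C x)) x = ip (C x) (C x) by rewrite saC.
rewrite e2 !ReD !ReN !ReMr -/p -/r in hz.
rewrite /q /nq in hr *.
set q' := Rc (ip (C x) (C x)) in hz hr *.
rewrite !(ReD, ReN, ReMr) -/q' -/r in hz.
have : 0 <= c * (c * p - q') by nra.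
by rewrite pmulr_rge0 // subr_ge0.
Qed.
End Pos.
Lemma le_sqrt_sq (R : realType) (a o : R) : 0 <= o ->
  (Num.sqrt a <= o) = (a <= o ^+ 2).
Proof. by move=> o0; rewrite -[in RHS]ler_sqrt ?exprn_ge0 // sqrtr_sqr ger0_norm. Qed.

Section OpNorm.
Variables (R : realType) (V : lmodType R[i]) (ip : V -> V -> R[i]).
Hypothesis hip : is_inner_product ip.

Lemma nq0 : nq ip 0 = 0.
Proof. by rewrite /nq (ip0l hip). Qed.

Variables (T : V -> V) (hT : lin T) (M : R) (hM : forall x, nq ip (T x) <= M * nq ip x).

Let E := ([set ipnorm ip (T x) | x in [set x | ipnorm ip x <= 1]])%classic.

Lemma E_sup : has_sup E.
Proof.
split.
  exists (ipnorm ip (T 0)); exists 0 => //=.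
  by rewrite /ipnorm -/(nq ip 0) nq0 sqrtr0 ler01.
exists (Num.sqrt `|M|) => _ [x /= hx <-].
rewrite /ipnorm -/(nq ip (T x)) -/(nq ip x) in hx *.
apply: ler_wsqrtr; apply: (le_trans (hM x)).
have nx1 : nq ip x <= 1.
  by move: hx; rewrite le_sqrt_sq ?ler01 // expr1n.
have := nq_ge0 hip x.
rewrite (le_trans (ler_wpM2r (nq_ge0 hip x) (ler_norm M))) //.
rewrite -[X in _ <= X]mulr1 ler_wpM2l //.
Qed.

Lemma opnorm_ge0 : 0 <= opnorm ip T.
Proof.
apply: le_trans (sup_upper_bound E_sup _); last first.
  by exists 0 => //=; rewrite /ipnorm -/(nq ip 0) nq0 sqrtr0 ler01.
exact: sqrtr_ge0.
Qed.

Lemma opnorm_le x : nq ip (T x) <= opnorm ip T ^+ 2 * nq ip x.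
Proof.
have [x0|xn0] := eqVneq (nq ip x) 0.
  by rewrite (nq_eq0 hip x0) (lin0 hT) !nq0 mulr0.
have xgt : 0 < nq ip x by rewrite lt_def xn0 nq_ge0.
set n := Num.sqrt (nq ip x).
have ngt : 0 < n by rewrite sqrtr_gt0.
have n2 : n ^+ 2 = nq ip x by rewrite sqr_sqrtr // ltW.
have hy : nq ip (n^-1%:C *: x) = 1.
  by rewrite (nqZr hip) exprVn n2 mulVf.
set y := n^-1%:C *: x.
have hE : E (ipnorm ip (T y)).
  by exists y => //=; rewrite /ipnorm -/(nq ip y) hy sqrtr1.
have := sup_upper_bound E_sup hE.
rewrite /ipnorm /y.
rewrite (linZ hT) -/(nq ip _) (nqZr hip) le_sqrt_sq; last exact: opnorm_ge0.
rewrite exprVn n2 => h.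
have -> : nq ip (T x) = nq ip x * ((nq ip x)^-1 * nq ip (T x)) by rewrite mulrA mulfV ?mul1r.
by rewrite mulrC ler_wpM2r // ltW.
Qed.
End OpNorm.
Section Main.
Variables (R : realType) (V : lmodType R[i]) (ip : V -> V -> R[i]).
Hypothesis hip : is_inner_product ip.
Variables (S Ss : V -> V).
Hypotheses (hS : lin S) (hSs : is_adjoint ip S Ss) (nS : forall x, S (Ss x) = Ss (S x)).
Hypothesis (hC : positive_op ip (im_part S Ss)).
Variables (M : R) (hM : forall x, ipnorm ip (S x) <= M * ipnorm ip x).

Local Notation A := (re_part S Ss).
Local Notation C := (im_part S Ss).

Lemma nqS_bound x : nq ip (S x) <= M ^+ 2 * nq ip x.
Proof.
have := hM x; rewrite /ipnorm -/(nq ip (S x)) -/(nq ip x).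
have e1 := sqr_sqrtr (nq_ge0 hip (S x)); have e2 := sqr_sqrtr (nq_ge0 hip x).
have g1 := sqrtr_ge0 (nq ip (S x)); have g2 := sqrtr_ge0 (nq ip x).
set s1 := Num.sqrt _ in e1 g1 *; set s2 := Num.sqrt _ in e2 g2 *.
rewrite -e1 -e2 => h.
have : 0 <= (M * s2 - s1) * (M * s2 + s1) by apply: mulr_ge0; lra.
move=> h'; nra.
Qed.

Lemma nqS_split x : nq ip (S x) = nq ip (A x) + nq ip (C x).
Proof.
have := nq_split hip hS hSs nS 0 x; rewrite -S_shift.
have z0 : (0:R)%:C = 0 :> R[i] by [].
by rewrite z0 mulr0 !scale0r !subr0.
Qed.

Lemma A_bnd x : nq ip (A x) <= M ^+ 2 * nq ip x.
Proof. apply: le_trans (nqS_bound x); rewrite nqS_split lerDl; exact: nq_ge0. Qed.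
Lemma C_bnd x : nq ip (C x) <= M ^+ 2 * nq ip x.
Proof. apply: le_trans (nqS_bound x); rewrite nqS_split lerDr; exact: nq_ge0. Qed.

Let a := opnorm ip A.
Let c := opnorm ip C.
Let hA := opnorm_le hip (A_lin hip hS hSs) A_bnd.
Let hCb := opnorm_le hip (C_lin hip hS hSs) C_bnd.
Let c0 : 0 <= c := opnorm_ge0 hip C_bnd.

Lemma shift_bound x :
  nq ip (S x - ('i * (c / 2)%:C) *: x) <= (a ^+ 2 + c ^+ 2 / 4) * nq ip x.
Proof.
rewrite (S_shift S Ss) (nq_split hip hS hSs nS) (nqB hip) (nqZr hip).
rewrite (ipZr hip ((c/2)%:C) (C x) x) conjR ReMr.
have hk := pos_key hip (C_lin hip hS hSs) (C_sa hip hSs) hC c0 hCb x.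
have := hA x; have := nq_ge0 hip x.
rewrite -/a -/c in hk *.
nra.
Qed.
End Main.
Lemma zid (G : zmodType) (p q u v w : G) :
  (p - u - (v - w)) - (q - v - (u - w)) = p - q.
Proof.
rewrite !opprD !opprK !addrA.
by rewrite (ACl (1*5*(2*7)*(3*6)*(4*8)))/= !addNr subrr !addr0.
Qed.

Theorem mainTheorem2 (R : realType) (V : lmodType R[i]) (ip : V -> V -> R[i])
  (hH : separable_hilbert ip)
  (S Ss T Ts : V -> V)
  (hS : bounded_op ip S) (hT : bounded_op ip T)
  (hSs : is_adjoint ip S Ss) (hTs : is_adjoint ip T Ts)
  (nS : forall x, S (Ss x) = Ss (S x)) (nT : forall x, T (Ts x) = Ts (T x))
  (hC : positive_op ip (im_part S Ss)) (hD : positive_op ip (im_part T Ts)) :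
  let A := re_part S Ss in let C := im_part S Ss in
  let B := re_part T Ts in let D := im_part T Ts in
  opnorm ip (fun x => S (T x) - T (S x))
  <= 2^-1 * Num.sqrt (4 * opnorm ip A ^+ 2 + opnorm ip C ^+ 2)
          * Num.sqrt (4 * opnorm ip B ^+ 2 + opnorm ip D ^+ 2).
Proof.
cbv zeta. set A := re_part S Ss. set C := im_part S Ss. set B := re_part T Ts. set D := im_part T Ts.
case: hH => hip _ _.
case: hS => hSl [MS hMS]; case: hT => hTl [MT hMT].
have bS := shift_bound hip hSl hSs nS hC hMS.
have bT := shift_bound hip hTl hTs nT hD hMT.
rewrite -/A -/C in bS; rewrite -/B -/D in bT.
set a := opnorm ip A in bS *; set c := opnorm ip C in bS *.
set b := opnorm ip B in bT *; set d := opnorm ip D in bT *.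
set k1 := 'i * (c / 2)%:C in bS; set k2 := 'i * (d / 2)%:C in bT.
have a0 : 0 <= a := opnorm_ge0 hip (A_bnd hip hSl hSs nS hMS).
have c0 : 0 <= c := opnorm_ge0 hip (C_bnd hip hSl hSs nS hMS).
have b0 : 0 <= b := opnorm_ge0 hip (A_bnd hip hTl hTs nT hMT).
have d0 : 0 <= d := opnorm_ge0 hip (C_bnd hip hTl hTs nT hMT).
set sg := a ^+ 2 + c ^+ 2 / 4 in bS; set tg := b ^+ 2 + d ^+ 2 / 4 in bT.
have sg0 : 0 <= sg by rewrite /sg; have := sqr_ge0 a; have := sqr_ge0 c; lra.
have tg0 : 0 <= tg by rewrite /tg; have := sqr_ge0 b; have := sqr_ge0 d; lra.
have comm x : S (T x) - T (S x) =
   (S (T x - k2 *: x) - k1 *: (T x - k2 *: x)) - (T (S x - k1 *: x) - k2 *: (S x - k1 *: x)).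
  rewrite !(linB hSl) !(linB hTl) !(linZ hSl) !(linZ hTl) !scalerBr !scalerA (mulrC k2 k1).
  by rewrite zid.
have key x : nq ip (S (T x) - T (S x)) <= 4 * sg * tg * nq ip x.
  rewrite comm; apply: le_trans (nqB_le hip _ _) _.
  have h1 := bS (T x - k2 *: x); have h2 := bT x.
  have h3 := bT (S x - k1 *: x); have h4 := bS x.
  have n0 := nq_ge0 hip x.
  have : sg * nq ip (T x - k2 *: x) <= sg * (tg * nq ip x) by apply: ler_wpM2l.
  have : tg * nq ip (S x - k1 *: x) <= tg * (sg * nq ip x) by apply: ler_wpM2l.
  nra.
set Bd := 2^-1 * _ * _.
have Bd0 : 0 <= Bd by rewrite /Bd !mulr_ge0 ?sqrtr_ge0 ?invr_ge0 ?ler0n.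
have Bd2 : Bd ^+ 2 = 4 * sg * tg.
  rewrite /Bd !exprMn !sqr_sqrtr; last 2 first.
    by apply: addr_ge0; [apply: mulr_ge0 => //; exact: exprn_ge0 | exact: exprn_ge0].
    by apply: addr_ge0; [apply: mulr_ge0 => //; exact: exprn_ge0 | exact: exprn_ge0].
  rewrite /sg /tg -/a -/b -/c -/d. by field.
rewrite /opnorm; apply: ge_sup.
  by exists (ipnorm ip (S (T 0) - T (S 0))); exists 0 => //=; rewrite /ipnorm -/(nq ip 0) (nq0 hip) sqrtr0 ler01.
move=> _ [x /= hx <-].
rewrite /ipnorm -/(nq ip x) in hx; rewrite /ipnorm -/(nq ip _).
have nx1 : nq ip x <= 1 by move: hx; rewrite le_sqrt_sq ?ler01 // expr1n.
rewrite le_sqrt_sq // Bd2; apply: le_trans (key x) _.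
rewrite -[X in _ <= X]mulr1 ler_wpM2l //.
by rewrite !mulr_ge0.
Qed.
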